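(* Let $n\ge 3$. Let $c_{n,6}=-\min_{x\in[-1,1]}Q_{n,6}(x)$ and $b_{n,6}=1+Q_{n,6}(1)/c_{n,6}$. Then there is no finite subset $Y\subseteq\mathbb{S}^{n-1}$ which is a spherical design of harmonic index $6$ and has $|Y|=b_{n,6}$ (i.e. there is no tight spherical design of harmonic index $6$ on $\mathbb{S}^{n-1}$).
   Context: $\mathbb{S}^{n-1}$ is the unit sphere in $\mathbb{R}^n$. A finite $Y\subseteq\mathbb{S}^{n-1}$ is a spherical design of harmonic index $t$ if $\sum_{\mathbf{x}\in Y}f(\mathbf{x})=0$ for every real homogeneous harmonic polynomial $f$ in $n$ variables of degree exactly $t$. Every such $Y$ satisfies $|Y|\ge b_{n,t}:=1+Q_{n,t}(1)/c_{n,t}$ with $c_{n,t}=-\min_{[-1,1]}Q_{n,t}$; $Y$ is called tight if equality holds. Here $Q_{n,6}(x)=\frac{n(n+2)(n+10)}{6!}\{(n+4)(n+6)(n+8)x^6-15(n+4)(n+6)x^4+45(n+4)x^2-15\}$ is the Gegenbauer polynomial of degree 6, normalized so that $Q_{n,6}(1)$ equals the dimension of the space of homogeneous harmonic polynomials of degree 6 in $n$ variables. *)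

(* Defs.v *)
From HB Require Import structures.
From mathcomp Require Import all_boot all_order all_algebra.
From mathcomp Require Import boolp classical_sets reals.
From mathcomp Require Import mpoly.
Set Implicit Arguments. Unset Strict Implicit. Unset Printing Implicit Defensive.
Import Order.TTheory GRing.Theory Num.Theory.
Local Open Scope ring_scope.
Local Open Scope classical_set_scope.

Section Defs.
Context {R : realType}.

(* Gegenbauer polynomial Q_{n,6}, normalized so Q_{n,6}(1) = dim Harm_6(R^n). *)
Definition Q6 (n : nat) (x : R) : R :=
  let m := n%:R : R in
  (m * (m + 2) * (m + 10) / 6`!%:R) *
  ((m + 4) * (m + 6) * (m + 8) * x ^+ 6 - 15 * (m + 4) * (m + 6) * x ^+ 4
   + 45 * (m + 4) * x ^+ 2 - 15).

(* c_{n,6} = - min_{x in [-1,1]} Q_{n,6}(x) (the infimum is attained). *)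
Definition c6 (n : nat) : R :=
  - inf [set Q6 n x | x in [set x : R | -1 <= x <= 1]].

Definition b6 (n : nat) : R := 1 + Q6 n 1 / c6 n.

Definition coords (n : nat) (y : 'rV[R]_n) : 'I_n -> R := fun i => y ord0 i.

Definition on_sphere (n : nat) (y : 'rV[R]_n) : Prop :=
  \sum_(i < n) y ord0 i ^+ 2 = 1.

Definition laplacian (n : nat) (p : {mpoly R[n]}) : {mpoly R[n]} :=
  \sum_(i < n) mderiv i (mderiv i p).

Definition harmonic_homog (n t : nat) (p : {mpoly R[n]}) : Prop :=
  p \is t.-homog /\ laplacian p = 0.

(* Y (a finite set given as a duplicate-free list) is a spherical design of
   harmonic index t *)
Definition harmonic_index_design (n t : nat) (Y : seq 'rV[R]_n) : Prop :=
  forall p : {mpoly R[n]}, harmonic_homog t p ->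
    \sum_(y <- Y) p.@[coords y] = 0.

End Defs.

(* Main.v *)
Require Import Defs.
From HB Require Import structures.
From mathcomp Require Import all_boot all_order all_algebra.
From mathcomp Require Import boolp classical_sets reals.
From mathcomp Require Import mpoly.
From mathcomp Require Import ring lra zify.
Import Order.TTheory GRing.Theory Num.Theory.
Local Open Scope ring_scope.

Module P1.

Section MP.
Variable R : realType.
Variable n : nat.
Implicit Types (p q : {mpoly R[n]}).

Lemma dX (i j : 'I_n) : mderiv i ('X_j : {mpoly R[n]}) = (i == j)%:R.
Proof.
rewrite mderivX mnm1E eq_sym.
have [->|ne] := eqVneq i j; last by rewrite scale0r.
have ->: (U_(j) - U_(j) = 0)%MM by apply/mnmP=> k; rewrite !mnmE subnn.
by rewrite mpolyX0 scale1r.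
Qed.

Lemma dexp i p k : mderiv i (p ^+ k.+1) = p ^+ k * mderiv i p *+ k.+1.
Proof.
elim: k => [|k ih]; first by rewrite expr1 expr0 mul1r.
rewrite exprS mderivM ih exprS -mulrnAr mulrSr.
ring.
Qed.

Variable e : 'I_n -> R.
Definition Lp : {mpoly R[n]} := \sum_i (e i)%:MP * 'X_i.
Definition Rp : {mpoly R[n]} := \sum_i 'X_i ^+ 2.

Lemma dL i : mderiv i Lp = (e i)%:MP.
Proof.
rewrite /Lp raddf_sum (bigD1 i) //= mderiv_mulC dX eqxx mulr1 big1 ?addr0 //.
by move=> j /negbTE hj; rewrite mderiv_mulC dX eq_sym hj mulr0.
Qed.

Lemma dR i : mderiv i Rp = 'X_i *+ 2.
Proof.
rewrite /Rp raddf_sum (bigD1 i) //= dexp dX eqxx expr1 mulr1 big1 ?addr0 //.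
by move=> j /negbTE hj; rewrite dexp dX eq_sym hj mulr0 mul0rn.
Qed.

Definition Ee : R := \sum_i e i ^+ 2.
Definition ca : R := (n%:R + 4) * (n%:R + 6) * (n%:R + 8).
Definition cb : R := 15 * (n%:R + 4) * (n%:R + 6).
Definition cc : R := 45 * (n%:R + 4).
Definition Zp : {mpoly R[n]} :=
  ca%:MP * Lp ^+ 6 - (cb * Ee)%:MP * (Lp ^+ 4 * Rp)
  + (cc * Ee ^+ 2)%:MP * (Lp ^+ 2 * Rp ^+ 2) - (15 * Ee ^+ 3)%:MP * Rp ^+ 3.

Lemma ddZ i : mderiv i (mderiv i Zp) =
  (30 * ca%:MP * Lp ^+ 4 - 12 * (cb * Ee)%:MP * Lp ^+ 2 * Rp + 2 * (cc * Ee ^+ 2)%:MP * Rp ^+ 2) * (e i)%:MP ^+ 2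
  + (- 16 * (cb * Ee)%:MP * Lp ^+ 3 + 16 * (cc * Ee ^+ 2)%:MP * Lp * Rp) * ((e i)%:MP * 'X_i)
  + (8 * (cc * Ee ^+ 2)%:MP * Lp ^+ 2 - 360 * (Ee ^+ 3)%:MP * Rp) * 'X_i ^+ 2
  + (- 2 * (cb * Ee)%:MP * Lp ^+ 4 + 4 * (cc * Ee ^+ 2)%:MP * Lp ^+ 2 * Rp - 90 * (Ee ^+ 3)%:MP * Rp ^+ 2).
Proof.
rewrite /Zp !(mderivB, mderivD, mderiv_mulC, mderivM, dexp, dL, dR, mderivC, dX, mderivMn) eqxx.
rewrite (rmorphM _ 15) /=.
ring.
Qed.

Lemma sum4 (P0 P1 P2 P3 : {mpoly R[n]}) :
  \sum_i (P0 * (e i)%:MP ^+ 2 + P1 * ((e i)%:MP * 'X_i) + P2 * 'X_i ^+ 2 + P3)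
  = P0 * Ee%:MP + P1 * Lp + P2 * Rp + P3 * (n%:R : R)%:MP.
Proof.
rewrite !big_split /= -!mulr_sumr sumr_const card_ord mpolyC_nat -mulr_natr.
congr (_ + _ + _ + _); first congr (_ * _).
  by rewrite /Ee rmorph_sum; apply: eq_bigr => i _; rewrite rmorphXn.
by rewrite mul1r mulr_natr.
Qed.

Lemma lapZ : laplacian Zp = 0.
Proof.
rewrite /laplacian (eq_bigr _ (fun i _ => ddZ i)) sum4.
rewrite /ca /cb /cc !(rmorphM, rmorphD, rmorphXn) /=.
ring.
Qed.

Lemma homC (c : R) : (c%:MP : {mpoly R[n]}) \is 0.-homog.
Proof. by rewrite -[c%:MP]mulr1 mul_mpolyC; apply: dhomogZ; exact: dhomog1. Qed.

Lemma homX i : ('X_i : {mpoly R[n]}) \is 1.-homog.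
Proof. by rewrite dhomogX; apply/eqP; apply: mdeg1. Qed.

Lemma homL : Lp \is 1.-homog.
Proof.
apply: (big_ind (fun p : {mpoly R[n]} => p \is 1.-homog)); first exact: dhomog0.
  by move=> p q hp hq; apply: dhomogD.
by move=> i _; exact: (dhomogM (homC _) (homX i)).
Qed.

Lemma homR : Rp \is 2.-homog.
Proof.
apply: (big_ind (fun p : {mpoly R[n]} => p \is 2.-homog)); first exact: dhomog0.
  by move=> p q hp hq; apply: dhomogD.
by move=> i _; exact: (dhomogMn 2 (homX i)).
Qed.

Lemma homZ : Zp \is 6.-homog.
Proof.
have h1 := dhomogM (homC ca) (dhomogMn 6 homL).
have h2 := dhomogM (homC (cb * Ee)) (dhomogM (dhomogMn 4 homL) homR).
have h3 := dhomogM (homC (cc * Ee ^+ 2)) (dhomogM (dhomogMn 2 homL) (dhomogMn 2 homR)).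
have h4 := dhomogM (homC (15 * Ee ^+ 3)) (dhomogMn 3 homR).
rewrite /Zp; apply: dhomogD; [apply: dhomogD|].
- by apply: dhomogD => //; rewrite dhomogN.
- exact: h3.
- by rewrite dhomogN.
Qed.

Lemma evalL (v : 'I_n -> R) : meval v Lp = \sum_i e i * v i.
Proof.
rewrite /Lp raddf_sum; apply: eq_bigr => i _.
by rewrite /= mevalM mevalC mevalXU.
Qed.

Lemma mevalXn (v : 'I_n -> R) (p : {mpoly R[n]}) k : meval v (p ^+ k) = meval v p ^+ k.
Proof. by elim: k => [|k ih]; rewrite ?expr0 ?meval1 // !exprS mevalM ih. Qed.

Lemma evalR (v : 'I_n -> R) : meval v Rp = \sum_i v i ^+ 2.
Proof.
rewrite /Rp raddf_sum; apply: eq_bigr => i _.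
by rewrite /= mevalXn mevalXU.
Qed.

Lemma evalZ (v : 'I_n -> R) : meval v Zp =
  ca * (\sum_i e i * v i) ^+ 6 - (cb * Ee) * ((\sum_i e i * v i) ^+ 4 * \sum_i v i ^+ 2)
  + (cc * Ee ^+ 2) * ((\sum_i e i * v i) ^+ 2 * (\sum_i v i ^+ 2) ^+ 2)
  - (15 * Ee ^+ 3) * (\sum_i v i ^+ 2) ^+ 3.
Proof.
by rewrite /Zp !(mevalB, mevalD, mevalM, mevalC, mevalXn) evalL evalR.
Qed.
End MP.

End P1.
Module P2.
Set Implicit Arguments.

Section Cubic.
Variable R : realFieldType.
Variable m : R.
Hypothesis hm : 3 <= m.
Definition fA := (m+4)*(m+6)*(m+8).
Definition fB := 15*(m+4)*(m+6).
Definition fC := 45*(m+4).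
Definition f (s : R) := fA * s^+3 - fB * s^+2 + fC * s - 15.
Definition f' (s : R) := 3 * fA * s^+2 - 2 * fB * s + fC.

Lemma fA_gt0 : 0 < fA. Proof. have hm0 := hm. rewrite /fA; apply: mulr_gt0; [apply: mulr_gt0|]. all: lra. Qed.
Lemma fB_gt0 : 0 < fB. Proof. have hm0 := hm. rewrite /fB; apply: mulr_gt0; [apply: mulr_gt0|]; lra. Qed.
Lemma fC_gt0 : 0 < fC. Proof. have hm0 := hm. rewrite /fC; apply: mulr_gt0; lra. Qed.

Lemma f1_gt0 : 0 < f 1.
Proof. have hm0 := hm.
have -> : f 1 = (m+4)*(m^+2 - m + 3) - 15 by rewrite /f /fA /fB /fC; ring.
have : 9 <= m^+2 - m + 3 by nra.
nra.
Qed.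

Lemma f_s1 : f (15 / (2 * (m + 8))) < -15.
Proof. have hm0 := hm.
set s := 15 / (2 * (m+8)).
have hs : s * (2 * (m + 8)) = 15 by rewrite /s mulfVK //; lra.
have s0 : 0 < s by rewrite /s divr_gt0 //; lra.
have -> : f s = s * (fA * s^+2 - fB * s + fC) - 15 by rewrite /f; ring.
suff : fA * s^+2 - fB * s + fC < 0 by nra.
have -> : fA * s^+2 - fB * s + fC = (m + 4) * (s * (m+6) * (s * (m+8) - 15) + 45).
  by rewrite /fA /fB /fC; ring.
have -> : s * (m + 8) = 15 / 2 by rewrite -hs; field.
have h4 : 0 < m + 4 by lra.
suff : s * (m+6) * (15 / 2 - 15) + 45 < 0 by nra.
have -> : s * (m+6) = 15 / 2 - 2 * s by nra.
have : s <= 15/22.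
  have : 22 <= 2 * (m + 8) by lra.
  nra.
nra.
Qed.

Lemma f_lb s : 0 <= s <= 1 -> 1 <= f s + f 1.
Proof. have hm0 := hm.
move=> /andP[s0 s1].
set P := m + 6.
have hP : 9 <= P by rewrite /P; lra.
have -> : f s + f 1 = (P - 2) * ((s^+3+1)*P^+2 + (2*s^+3 - 15*s^+2 - 13)*P + 45*(s+1)) - 30.
  by rewrite /f /fA /fB /fC /P; ring.
have g9 : 5 <= 99 * s^+3 - 135 * s^+2 + 45 * s + 9.
  have := mulr_ge0 s0 (sqr_ge0 (s - 7/10)).
  nra.
have mono : 0 <= (P - 9) * ((s^+3+1)*(P+9) + (2*s^+3 - 15*s^+2 - 13)).
  apply: mulr_ge0; first lra.
  have : 0 <= s^+3 by apply: exprn_ge0.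
  have : 0 <= s * (s - 1/2)^+2 by apply: mulr_ge0 => //; apply: sqr_ge0.
  nra.
have : 99 * s^+3 - 135 * s^+2 + 45 * s + 9 <=
   (s^+3+1)*P^+2 + (2*s^+3 - 15*s^+2 - 13)*P + 45*(s+1) by nra.
nra.
Qed.

Lemma f_diff s t : f t - f s = (t - s) * (f' s + (t - s) * (fA * (t + 2 * s) - fB)).
Proof. rewrite /f /f'; ring. Qed.

Lemma crit1 s : 0 < s < 1 -> (forall t, 0 <= t <= 1 -> f s <= f t) -> f' s = 0.
Proof.
have hm0 := hm.
move=> /andP[s0 s1] hmin.
have hA := fA_gt0; have hB := fB_gt0.
set M := 3 * fA + fB.
have hM : 0 < M by rewrite /M; lra.
have bnd : forall t, 0 <= t <= 1 -> `|fA * (t + 2 * s) - fB| <= M.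
  move=> t /andP[t0 t1]; rewrite ler_norml; apply/andP; split; rewrite /M; nra.
set d := f' s.
have [dpos|dneg|//] := ltgtP d 0.
-
  set h := Num.min (1 - s) (- d / (2 * M)).
  have h0 : 0 < h by rewrite /h lt_min; apply/andP; split; [lra| apply: divr_gt0; lra].
  have h1 : h <= 1 - s by rewrite /h ge_min lexx.
  have h2 : h * (2 * M) <= - d.
    have : h <= - d / (2 * M) by rewrite /h ge_min lexx orbT.
    by rewrite ler_pdivlMr //; lra.
  have hr : 0 <= s + h <= 1 by apply/andP; split; lra.
  have := hmin _ hr; rewrite -subr_ge0 f_diff -/d => H.
  have := bnd _ hr; rewrite ler_norml => /andP[b1 b2].
  have : (s + h - s) * (d + (s + h - s) * (fA * (s + h + 2 * s) - fB)) < 0.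
    have -> : s + h - s = h by ring.
    rewrite pmulr_rlt0 //; nra.
  lra.
- set h := Num.min s (d / (2 * M)).
  have h0 : 0 < h by rewrite /h lt_min; apply/andP; split; [lra| apply: divr_gt0; lra].
  have h1 : h <= s by rewrite /h ge_min lexx.
  have h2 : h * (2 * M) <= d.
    have : h <= d / (2 * M) by rewrite /h ge_min lexx orbT.
    by rewrite ler_pdivlMr //; lra.
  have hr : 0 <= s - h <= 1 by apply/andP; split; lra.
  have := hmin _ hr; rewrite -subr_ge0 f_diff -/d => H.
  have := bnd _ hr; rewrite ler_norml => /andP[b1 b2].
  have : (s - h - s) * (d + (s - h - s) * (fA * (s - h + 2 * s) - fB)) < 0.
    have -> : s - h - s = - h by ring.
    rewrite mulNr oppr_lt0; apply: mulr_gt0 => //. nra.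
  lra.
Qed.

Lemma crit2 s : 0 < s < 1 -> (forall t, 0 <= t <= 1 -> f s <= f t) -> fB <= 3 * fA * s.
Proof.
have hm0 := hm.
move=> hs hmin; have d0 := @crit1 s hs hmin.

move: hs => /andP[s0 s1].
have hA := fA_gt0; have hB := fB_gt0.
rewrite leNgt; apply/negP => hlt.
set h := Num.min (1 - s) ((fB - 3 * fA * s) / (2 * fA)).
have h0 : 0 < h by rewrite /h lt_min; apply/andP; split; [lra| apply: divr_gt0; lra].
have h1 : h <= 1 - s by rewrite /h ge_min lexx.
have h2 : h * (2 * fA) <= fB - 3 * fA * s.
  have : h <= (fB - 3 * fA * s) / (2 * fA) by rewrite /h ge_min lexx orbT.
  by rewrite ler_pdivlMr //; lra.
have : 0 <= s + h <= 1 by apply/andP; split; lra.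
move=> /hmin; rewrite -subr_ge0 f_diff d0 add0r.
have -> : s + h - s = h by ring.
have : fA * (s + h + 2 * s) - fB < 0 by nra.
rewrite mulrA pmulr_rge0; [lra | exact: mulr_gt0].
Qed.

Lemma crit_uniq s t : f' s = 0 -> fB <= 3 * fA * s -> f' t = 0 -> fB <= 3 * fA * t -> s = t.
Proof.
have hm0 := hm.
move=> hs1 hs2 ht1 ht2; have hA := fA_gt0.
have e : (s - t) * (3 * fA * (s + t) - 2 * fB) = 0.
  have -> : (s - t) * (3 * fA * (s + t) - 2 * fB) = f' s - f' t by rewrite /f'; ring.
  by rewrite hs1 ht1 subrr.
move/eqP: e; rewrite mulf_eq0 => /orP[/eqP|/eqP e]; first by move/eqP; rewrite subr_eq0 => /eqP.
have e1 : fB = 3 * fA * s by lra.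
have e2 : fB = 3 * fA * t by lra.
have : 3 * fA * (s - t) = 0 by lra.
move/eqP; rewrite mulf_eq0 => /orP[/eqP|/eqP]; first lra.
by move/eqP; rewrite subr_eq0 => /eqP.
Qed.

Lemma s_ge s : fB <= 3 * fA * s -> 1 <= m * s.
Proof.
have hm0 := hm.
move=> h.
have h8 : 0 < m + 8 by lra.
have : 5 <= (m + 8) * s.
  have h46 : 0 < (m+4)*(m+6) by apply: mulr_gt0; lra.
  move: h; rewrite /fA /fB.
  have -> : 3 * ((m + 4) * (m + 6) * (m + 8)) * s = 3 * ((m + 4) * (m + 6)) * ((m + 8) * s) by ring.
  have -> : 15 * (m + 4) * (m + 6) = 3 * ((m+4)*(m+6)) * 5 by ring.
  by rewrite ler_pM2l //; apply: mulr_gt0 => //; lra.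
move=> h5.
have : 1 * (m + 8) <= (m * s) * (m + 8).
  have -> : (m * s) * (m + 8) = m * ((m + 8) * s) by ring.
  have : 5 * m <= m * ((m + 8) * s) by rewrite mulrC ler_pM2l //; lra.
  lra.
by rewrite ler_pM2r.
Qed.

Lemma kappa_pos s : f' s = 0 -> fB <= 3 * fA * s -> 0 < 30 * fA * s^+2 - 12 * fB * s + 2 * fC.
Proof.
have hm0 := hm.
move=> h1 h2.
have -> : 30 * fA * s^+2 - 12 * fB * s + 2 * fC = 8 * (fB * s - fC) + 10 * f' s by rewrite /f'; ring.
rewrite h1 mulr0 addr0.
have h8 : 0 < m + 8 by lra.
have : 5 <= (m + 8) * s.
  have h46 : 0 < (m+4)*(m+6) by apply: mulr_gt0; lra.
  move: h2; rewrite /fA /fB.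
  have -> : 3 * ((m + 4) * (m + 6) * (m + 8)) * s = 3 * ((m + 4) * (m + 6)) * ((m + 8) * s) by ring.
  have -> : 15 * (m + 4) * (m + 6) = 3 * ((m+4)*(m+6)) * 5 by ring.
  by rewrite ler_pM2l //; apply: mulr_gt0 => //; lra.
move=> h5.
have h3 : 3 < (m + 6) * s.
  have : 3 * (m + 8) < ((m + 6) * s) * (m + 8).
    have -> : ((m + 6) * s) * (m + 8) = (m + 6) * ((m + 8) * s) by ring.
    have : 5 * (m + 6) <= (m + 6) * ((m + 8) * s) by rewrite mulrC ler_pM2l //; lra.
    lra.
  by rewrite ltr_pM2r.
have -> : fB * s - fC = 15 * (m + 4) * ((m + 6) * s - 3) by rewrite /fB /fC; ring.
apply: mulr_gt0; first lra.
apply: mulr_gt0; [apply: mulr_gt0|]; lra.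
Qed.
End Cubic.
Arguments f {R}. Arguments f' {R}. Arguments fA {R}. Arguments fB {R}. Arguments fC {R}.
Arguments fA_gt0 {R}. Arguments fB_gt0 {R}. Arguments fC_gt0 {R}. Arguments f1_gt0 {R}.
Arguments f_s1 {R}. Arguments f_lb {R}. Arguments f_diff {R}. Arguments crit1 {R}.
Arguments crit2 {R}. Arguments crit_uniq {R}. Arguments s_ge {R}. Arguments kappa_pos {R}.

End P2.
Module P3.
Set Implicit Arguments.

Section LA.
Variables (R : realFieldType) (n : nat).
Definition dot (u v : 'rV[R]_n) : R := \sum_i u ord0 i * v ord0 i.

Lemma dotC u v : dot u v = dot v u.
Proof. by apply: eq_bigr => i _; rewrite mulrC. Qed.
Lemma dotDl u v w : dot (u + v) w = dot u w + dot v w.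
Proof. by rewrite /dot -big_split; apply: eq_bigr => i _; rewrite !mxE mulrDl. Qed.
Lemma dotZl c u w : dot (c *: u) w = c * dot u w.
Proof. by rewrite /dot mulr_sumr; apply: eq_bigr => i _; rewrite !mxE mulrA. Qed.
Lemma dotDr u v w : dot w (u + v) = dot w u + dot w v.
Proof. by rewrite !(dotC w) dotDl. Qed.
Lemma dotZr c u w : dot w (c *: u) = c * dot w u.
Proof. by rewrite !(dotC w) dotZl. Qed.
Lemma dotNl u w : dot (- u) w = - dot u w.
Proof. by rewrite -scaleN1r dotZl mulN1r. Qed.
Lemma dotNr u w : dot w (- u) = - dot w u.
Proof. by rewrite -scaleN1r dotZr mulN1r. Qed.
Lemma dotBl u v w : dot (u - v) w = dot u w - dot v w.
Proof. by rewrite dotDl dotNl. Qed.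
Lemma dotBr u v w : dot w (u - v) = dot w u - dot w v.
Proof. by rewrite dotDr dotNr. Qed.

Variables (Y : seq 'rV[R]_n) (lam : R).
Definition DD u v := \sum_(y <- Y) dot u y * dot v y - lam * dot u v.

Lemma DDC u v : DD u v = DD v u.
Proof. by rewrite /DD dotC; congr (_ - _); apply: eq_bigr => y _; rewrite mulrC. Qed.
Lemma DDDl u v w : DD (u + v) w = DD u w + DD v w.
Proof.
rewrite /DD dotDl.
have -> : \sum_(y <- Y) dot (u + v) y * dot w y =
   \sum_(y <- Y) dot u y * dot w y + \sum_(y <- Y) dot v y * dot w y.
  by rewrite -big_split; apply: eq_bigr => y _; rewrite dotDl mulrDl.
ring.
Qed.
Lemma DDZl c u w : DD (c *: u) w = c * DD u w.
Proof.
rewrite /DD dotZl mulrBr [c * \sum_(y <- Y) _]big_distrr /=.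
congr (_ - _); last by rewrite mulrCA.
by apply: eq_bigr => y _; rewrite dotZl mulrA.
Qed.
Lemma DDDr u v w : DD w (u + v) = DD w u + DD w v.
Proof. by rewrite !(DDC w) DDDl. Qed.
Lemma DDZr c u w : DD w (c *: u) = c * DD w u.
Proof. by rewrite !(DDC w) DDZl. Qed.
Lemma DDBl u v w : DD (u - v) w = DD u w - DD v w.
Proof. by rewrite -scaleN1r DDDl DDZl mulN1r. Qed.
Lemma DDBr u v w : DD w (u - v) = DD w u - DD w v.
Proof. by rewrite !(DDC w) DDBl. Qed.

Definition Hperp x := forall v, dot v x = 0 -> DD v v = 0.

Lemma lemA x : Hperp x -> dot x x = 1 -> forall v,
  DD v v = 2 * dot v x * DD x v - (dot v x) ^+ 2 * DD x x.
Proof.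
move=> H xx v.
have hp : dot (v - dot v x *: x) x = 0 by rewrite dotBl dotZl xx mulr1 subrr.
have := H _ hp.
rewrite !(DDBl, DDBr, DDZl, DDZr) (DDC v x).
move=> e; rewrite -[LHS]subr0 -e; ring.
Qed.

Lemma LA3 x1 x2 x3 s :
  Hperp x1 -> Hperp x2 -> Hperp x3 ->
  dot x1 x1 = 1 -> dot x2 x2 = 1 -> dot x3 x3 = 1 ->
  (dot x1 x2) ^+ 2 = s -> (dot x1 x3) ^+ 2 = s -> (dot x2 x3) ^+ 2 = s ->
  0 < s < 1 -> forall v, DD v v = 0.
Proof.
move=> H1 H2 H3 n1 n2 n3 s12 s13 s23 /andP[s0 s1].
pose L v := 2 * DD x1 v - dot v x1 * DD x1 x1.
have LD u v : L (u + v) = L u + L v by rewrite /L DDDr dotDl; ring.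
have LZ c u : L (c *: u) = c * L u by rewrite /L DDZr dotZl; ring.
have hA v : DD v v = dot v x1 * L v.
  by rewrite (@lemA x1 H1 n1) /L; ring.
set a12 := dot x1 x2.
pose P2 w := w - dot w x2 *: x2.
have P2perp w : dot (P2 w) x2 = 0 by rewrite /P2 dotBl dotZl n2 mulr1 subrr.
have gh w : dot (P2 w) x1 * L (P2 w) = 0.
  by have := H2 _ (P2perp w); rewrite hA.
have gE w : dot (P2 w) x1 = dot w x1 - dot w x2 * a12 by rewrite /P2 dotBl dotZl (dotC x2 x1).
have hE w : L (P2 w) = L w - dot w x2 * L x2 by rewrite /P2 -scaleN1r LD LZ LZ; ring.
have hzero : forall w, L (P2 w) = 0.
  move=> w0; apply/eqP/negP => /negP hw0.
  have g1 : dot (P2 x1) x1 != 0.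
    rewrite gE n1 -/a12 -expr2 s12; apply/eqP => e; lra.
  have hx1 : L (P2 x1) = 0.
    by have := gh x1; move/eqP; rewrite mulf_eq0 (negbTE g1) /= => /eqP.
  have gw0 : dot (P2 w0) x1 = 0.
    by have := gh w0; move/eqP; rewrite mulf_eq0 (negbTE hw0) orbF => /eqP.
  have := gh (x1 + w0).
  have -> : P2 (x1 + w0) = P2 x1 + P2 w0.
    by rewrite /P2 dotDl scalerDl opprD addrACA.
  rewrite dotDl LD hx1 gw0 add0r addr0.
  by move/eqP; rewrite mulf_eq0 (negbTE g1) (negbTE hw0).
set beta := L x2.
have hB v : DD v v = beta * dot v x1 * dot v x2.
  by rewrite hA; have := hzero v; rewrite hE => e; rewrite (_ : L v = dot v x2 * beta); [ring | exact: subr0_eq].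
have hbeta : beta = 0.
  pose v := x1 - dot x1 x3 *: x3.
  have vp : dot v x3 = 0 by rewrite /v dotBl dotZl n3 mulr1 subrr.
  have := H3 _ vp; rewrite hB /v !dotBl !dotZl n1 (dotC x3 x1) (dotC x3 x2).
  set a13 := dot x1 x3; set a23 := dot x2 x3.
  move/eqP; rewrite !mulf_eq0 => /orP[/orP[/eqP//|]|].
  - move/eqP => e; have : s = 1 by rewrite -s13 -/a13 expr2; lra.
    lra.
  - move/eqP => e.
    have e2 : s = s * s.
      by rewrite -{1}s12 (_ : dot x1 x2 = a13 * a23) ?exprMn ?s13 ?s23 //; lra.
    have : s * (s - 1) = 0 by rewrite mulrBr mulr1 -e2 subrr.
    move/eqP; rewrite mulf_eq0 => /orP[/eqP|/eqP]; lra.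
by move=> v; rewrite hB hbeta; ring.
Qed.
End LA.
Arguments dot {R n}.
Arguments dotC {R n}. Arguments dotDl {R n}. Arguments dotZl {R n}.
Arguments dotDr {R n}. Arguments dotZr {R n}. Arguments dotNl {R n}.
Arguments dotNr {R n}. Arguments dotBl {R n}. Arguments dotBr {R n}.
Arguments DD {R n}. Arguments DDC {R n}. Arguments DDDl {R n}. Arguments DDZl {R n}.
Arguments DDDr {R n}. Arguments DDZr {R n}. Arguments DDBl {R n}. Arguments DDBr {R n}.
Arguments Hperp {R n}. Arguments lemA {R n}. Arguments LA3 {R n}.

End P3.
Unset Implicit Arguments.
Import P1 P2 P3.

Section Core.
Variables (R : realType) (n : nat).
Local Notation m := (n%:R : R).
Local Notation f := (P2.f m).
Local Notation f' := (P2.f' m).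
Local Notation fA := (P2.fA m).
Local Notation fB := (P2.fB m).
Local Notation fC := (P2.fC m).
Local Notation dot := (@P3.dot R n).

Definition zf (u E : R) := fA * u ^+ 6 - fB * E * u ^+ 4 + fC * E ^+ 2 * u ^+ 2 - 15 * E ^+ 3.

Lemma design_sum (Y : seq 'rV[R]_n) : harmonic_index_design 6 Y ->
  (forall y, y \in Y -> dot y y = 1) ->
  forall e : 'rV[R]_n, \sum_(y <- Y) zf (dot e y) (dot e e) = 0.
Proof.
move=> H hY e.
have := H (@P1.Zp R n (@coords R n e)) (conj (@homZ R n (@coords R n e)) (@lapZ R n (@coords R n e))).
move=> h; rewrite -[X in _ = X]h; apply: eq_big_seq => y yY.
rewrite evalZ.
have -> : \sum_i @coords R n y i ^+ 2 = dot y y by apply: eq_bigr => i _; rewrite expr2.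
rewrite (hY y yY).
have -> : @Ee R n (@coords R n e) = dot e e by apply: eq_bigr => i _; rewrite expr2.
rewrite /zf /ca /cb /cc /P2.fA /P2.fB /P2.fC /dot /coords; ring.
Qed.

Lemma sum_const_seq (T : Type) (Y : seq T) (c : R) : \sum_(y <- Y) c = (size Y)%:R * c.
Proof.
elim: Y => [|a Y ih]; first by rewrite big_nil mul0r.
by rewrite big_cons ih /= -addn1 natrD; ring.
Qed.

Lemma sphere_dot (y : 'rV[R]_n) : on_sphere y -> dot y y = 1.
Proof. by rewrite /on_sphere => <-; apply: eq_bigr => i _; rewrite expr2. Qed.

Lemma dot_ge0 (x : 'rV[R]_n) : 0 <= dot x x.
Proof. by apply: sumr_ge0 => i _; rewrite -expr2 sqr_ge0. Qed.

Lemma cs (x y : 'rV[R]_n) : dot x x = 1 -> dot y y = 1 -> -1 <= dot x y <= 1.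
Proof.
move=> hx hy.
have h1 := dot_ge0 (x - y); have h2 := dot_ge0 (x + y).
move: h1 h2; rewrite !(dotBl, dotBr, dotDl, dotDr) hx hy (dotC y x) => h1 h2.
apply/andP; split; lra.
Qed.

Lemma sum_ind (T : eqType) (Y : seq T) x : x \in Y -> uniq Y ->
  \sum_(y <- Y) ((y == x)%:R : R) = 1.
Proof.
move=> xY uY; rewrite (bigD1_seq x) //= eqxx big1 ?addr0 //.
by move=> y /negbTE ->.
Qed.

Lemma core (Y : seq 'rV[R]_n) (K c : R) :
  (3 <= n)%N -> uniq Y -> (forall y, y \in Y -> dot y y = 1) ->
  (forall e : 'rV[R]_n, \sum_(y <- Y) zf (dot e y) (dot e e) = 0) ->
  0 < K -> 15 * K < c -> c < K * f 1 ->
  (forall u, -1 <= u <= 1 -> - c <= K * f (u ^+ 2)) ->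
  (size Y)%:R = 1 + K * f 1 / c -> False.
Proof.
move=> hn uY hY hD hK hc15 hcf hlb hN.
have hm3 : 3 <= m by rewrite (ler_nat R 3 n).
have c0 : 0 < c by lra.
set N := (size Y)%:R in hN.
have hNc : N * c = c + K * f 1 by rewrite hN; field; lra.
have hq : forall x, x \in Y -> \sum_(y <- Y) f (dot x y ^+ 2) = 0.
  move=> x xY; have := hD x; rewrite (hY x xY) => h; rewrite -[RHS]h.
  by apply: eq_bigr => y _; rewrite /zf /P2.f; ring.
have tight : forall x y, x \in Y -> y \in Y -> y != x -> K * f (dot x y ^+ 2) = - c.
  move=> x y xY yY yx.
  have hs : \sum_(z <- Y) (K * f (dot x z ^+ 2) + c) = N * c.
    by rewrite big_split /= -mulr_sumr hq // mulr0 add0r sum_const_seq.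
  rewrite (bigD1_seq x) //= (hY x xY) expr1n hNc in hs.
  have hrest : \sum_(z <- Y | z != x) (K * f (dot x z ^+ 2) + c) = 0 by lra.
  move: hrest; rewrite big_seq_cond => /eqP; rewrite psumr_eq0.
    move/allP => /(_ y yY); rewrite yY yx /= => /eqP; lra.
  move=> z /andP[zY _]; have := hlb (dot x z) (cs _ _ (hY x xY) (hY z zY)); lra.
have f0 : f 0 = -15 by rewrite /P2.f; ring.
have pairs : forall x y, x \in Y -> y \in Y -> y != x ->
    [/\ 0 < dot x y ^+ 2 < 1, f' (dot x y ^+ 2) = 0 & fB <= 3 * fA * (dot x y ^+ 2)].
  move=> x y xY yY yx.
  have ht := tight x y xY yY yx.
  have hcs := cs _ _ (hY x xY) (hY y yY).
  set s := dot x y ^+ 2 in ht *.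
  have hmin : forall t, 0 <= t <= 1 -> f s <= f t.
    move=> t /andP[t0 t1].
    have st : Num.sqrt t ^+ 2 = t by rewrite sqr_sqrtr.
    have sq0 : 0 <= Num.sqrt t by apply: sqrtr_ge0.
    have : -1 <= Num.sqrt t <= 1 by apply/andP; split; nra.
    move/hlb; rewrite st -ht => h.
    by rewrite -(ler_pM2l hK).
  have s01 : 0 < s < 1.
    have s0 : 0 <= s by rewrite /s sqr_ge0.
    have s1 : s <= 1 by rewrite /s; nra.
    apply/andP; split.
      rewrite lt_neqAle s0 andbT; apply/eqP => e.
      by move: ht; rewrite -e f0; lra.
    rewrite lt_neqAle s1 andbT; apply/eqP => e.
    by move: ht; rewrite e; lra.
  split => //; [exact: crit1 hm3 s s01 hmin | exact: crit2 hm3 s s01 hmin].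
have N3 : (2 < size Y)%N.
  rewrite -(ltr_nat R) -/N hN.
  have : 1 < K * f 1 / c by rewrite ltr_pdivlMr // mul1r.
  lra.
set x1 := nth 0 Y 0; set x2 := nth 0 Y 1; set x3 := nth 0 Y 2.
have x1Y : x1 \in Y by apply: mem_nth; apply: leq_trans N3.
have x2Y : x2 \in Y by apply: mem_nth; apply: leq_trans N3.
have x3Y : x3 \in Y by apply: mem_nth; apply: leq_trans N3.
have d21 : x2 != x1 by rewrite /x1 /x2 nth_uniq //; apply: leq_trans N3.
have d31 : x3 != x1 by rewrite /x1 /x3 nth_uniq //; apply: leq_trans N3.
have d32 : x3 != x2 by rewrite /x2 /x3 nth_uniq //; apply: leq_trans N3.
set s0 := dot x1 x2 ^+ 2.
have [s0_01 s0_crit s0_ge] := pairs x1 x2 x1Y x2Y d21.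
have same : forall x y, x \in Y -> y \in Y -> y != x -> dot x y ^+ 2 = s0.
  move=> x y xY yY yx; have [_ h1 h2] := pairs x y xY yY yx.
  exact: crit_uniq _ hm3 _ _ h1 h2 s0_crit s0_ge.
set k2 := 15 * fA * s0 ^+ 2 - 6 * fB * s0 + fC.
have k2pos : 0 < k2.
  have := kappa_pos _ hm3 s0 s0_crit s0_ge; rewrite /k2; lra.
set lam := f' 1 / k2.
rewrite -/s0 in s0_01 s0_crit s0_ge.
have HP : forall x, x \in Y -> Hperp Y lam x.
  move=> x xY v vx.
  set g := dot v v.
  have vx' : dot x v = 0 by rewrite dotC.
  pose Zt t y := zf (dot x y + t * dot v y) (1 + t ^+ 2 * g).
  have eZ : forall t, \sum_(y <- Y) Zt t y = 0.
    move=> t; rewrite -[RHS](hD (x + t *: v)); apply: eq_bigr => y _.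
    rewrite /Zt !(dotDl, dotDr, dotZl, dotZr) (hY x xY) vx vx' -/g; congr zf; ring.
  have e1 : \sum_(y <- Y) (dot v y ^+ 2 * (15 * fA * dot x y ^+ 4 - 6 * fB * dot x y ^+ 2 + fC)
       + g * (- fB * dot x y ^+ 4 + 2 * fC * dot x y ^+ 2 - 45)) = 0.
    have -> : \sum_(y <- Y) (dot v y ^+ 2 * (15 * fA * dot x y ^+ 4 - 6 * fB * dot x y ^+ 2 + fC)
       + g * (- fB * dot x y ^+ 4 + 2 * fC * dot x y ^+ 2 - 45)) =
       \sum_(y <- Y) (3/4 * (Zt 1 y + Zt (-1) y) - 3/40 * (Zt 2 y + Zt (-2) y)
          + 1/180 * (Zt 3 y + Zt (-3) y) - 49/36 * Zt 0 y).
      by apply: eq_bigr => y _; rewrite /Zt /zf; field.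
    clearbody Zt; rewrite !(sumrB, big_split) /= -!mulr_sumr !big_split /= !eZ; ring.
  have e2 : forall y, y \in Y ->
     dot v y ^+ 2 * (15 * fA * dot x y ^+ 4 - 6 * fB * dot x y ^+ 2 + fC)
       + g * (- fB * dot x y ^+ 4 + 2 * fC * dot x y ^+ 2 - 45)
     = dot v y ^+ 2 * k2 + 3 * g * f (dot x y ^+ 2) - (y == x)%:R * (g * f' 1).
    move=> y yY; have [->|yx] := eqVneq y x.
      by rewrite vx (hY x xY) /P2.f /P2.f' /= mulr1n; ring.
    have h4 : dot x y ^+ 4 = (dot x y ^+ 2) ^+ 2 by rewrite -exprM.
    rewrite h4 (same x y xY yY yx) /k2 /P2.f /= mulr0n.
    move: s0_crit; rewrite /P2.f' => hc'.
    have hC : fC = 2 * fB * s0 - 3 * fA * s0 ^+ 2 by lra.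
    rewrite hC; ring.
  have e3 : (\sum_(y <- Y) dot v y ^+ 2) * k2 = g * f' 1.
    move: e1; rewrite (eq_big_seq _ e2) sumrB big_split /= -mulr_suml -mulr_sumr hq //.
    rewrite -mulr_suml sum_ind //; lra.
  rewrite /DD -/g.
  have -> : \sum_(y <- Y) dot v y * dot v y = \sum_(y <- Y) dot v y ^+ 2.
    by apply: eq_bigr => y _; rewrite expr2.
  have -> : \sum_(y <- Y) dot v y ^+ 2 = g * f' 1 / k2.
    by rewrite -e3; field; lra.
  rewrite /lam; field; lra.
have Dz : forall v, DD Y lam v v = 0.
  apply: (@LA3 R n Y lam x1 x2 x3 s0) => //; try exact: HP.
  - exact: hY.
  - exact: hY.
  - exact: hY.
  - exact: same.
  - exact: same.
have hS : \sum_(y <- Y) dot x1 y * dot x1 y = lam.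
  by have := Dz x1; rewrite /DD (hY x1 x1Y) mulr1 => /eqP; rewrite subr_eq0 => /eqP.
have hS2 : \sum_(y <- Y) dot x1 y * dot x1 y = 1 + (N - 1) * s0.
  rewrite (bigD1_seq x1) //= (hY x1 x1Y) mulr1.
  have -> : \sum_(y <- Y | y != x1) dot x1 y * dot x1 y = \sum_(y <- Y | y != x1) s0.
    rewrite big_seq_cond [RHS]big_seq_cond; apply: eq_bigr => y /andP[yY yx].
    by rewrite -expr2 same.
  have : \sum_(y <- Y) s0 = s0 + \sum_(y <- Y | y != x1) s0 by rewrite (bigD1_seq x1).
  rewrite sum_const_seq -/N => h; lra.
have dd : forall (i : 'I_n) (y : 'rV[R]_n), dot (delta_mx 0 i) y = y 0 i.
  move=> i y; rewrite /P3.dot (bigD1 i) //= mxE !eqxx mul1r big1 ?addr0 //.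
  by move=> j /negbTE ji; rewrite mxE eq_sym ji andbF mul0r.
have tr : 0 = N - lam * m.
  have : \sum_(i < n) DD Y lam (delta_mx 0 i) (delta_mx 0 i) = 0.
    by rewrite big1 // => i _; exact: Dz.
  rewrite /DD sumrB.
  have E1 : \sum_(i < n) \sum_(y <- Y) dot (delta_mx 0 i) y * dot (delta_mx 0 i) y = N.
    rewrite (eq_bigr (fun i : 'I_n => \sum_(y <- Y) y 0 i * y 0 i)); last first.
      by move=> i _; apply: eq_bigr => y _; rewrite dd.
    rewrite exchange_big /= big_seq (eq_bigr (fun _ => 1)); last first.
      by move=> y yY; exact: (hY y yY).
    by rewrite -big_seq sum_const_seq mulr1.
  have E2 : \sum_(i < n) lam * dot (delta_mx 0 i) (delta_mx (0 : 'I_1) i) = lam * m.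
    rewrite (eq_bigr (fun _ => lam)); last by move=> i _; rewrite dd mxE !eqxx mulr1.
    by rewrite sumr_const card_ord mulr_natr.
  rewrite E1 E2 => h; lra.
have hms := s_ge _ hm3 s0 s0_ge.
have N3r : 3 <= N by rewrite /N (ler_nat R 3).
nra.
Qed.
End Core.

Theorem mainTheorem2 (R : realType) (n : nat) (hn : (3 <= n)%N) :
  ~ exists Y : seq 'rV[R]_n,
      [/\ uniq Y, (forall y, y \in Y -> on_sphere y),
          harmonic_index_design 6 Y & (size Y)%:R = b6 (R := R) n].
Proof.
case=> Y [uY hS hD hN].
set m : R := n%:R.
have hm3 : 3 <= m by rewrite /m (ler_nat R 3 n).
set K : R := m * (m + 2) * (m + 10) / 6`!%:R.
have hK : 0 < K.
  rewrite /K; apply: divr_gt0; last by rewrite ltr0n fact_gt0.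
  apply: mulr_gt0; [apply: mulr_gt0|]; lra.
have Q6E : forall x : R, Q6 n x = K * P2.f m (x ^+ 2).
  by move=> x; rewrite /Q6 /K /P2.f /P2.fA /P2.fB /P2.fC -/m; ring.
set S := ([set Q6 n x | x in [set x : R | -1 <= x <= 1]])%classic.
have inS : forall u : R, -1 <= u <= 1 -> S (Q6 n u) by move=> u hu; exists u.
have lbS : forall z, S z -> K * (1 - P2.f m 1) <= z.
  move=> z [u /= hu <-]; rewrite Q6E ler_pM2l //.
  have : 0 <= u ^+ 2 <= 1 by apply/andP; split; [exact: sqr_ge0 | nra].
  move/(f_lb _ hm3); lra.
have hlbS : has_lbound S by exists (K * (1 - P2.f m 1)) => z; exact: lbS.
have infle : forall u : R, -1 <= u <= 1 -> inf S <= Q6 n u.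
  by move=> u hu; apply: (ge_inf hlbS); exact: inS.
have infge : K * (1 - P2.f m 1) <= inf S.
  apply: lb_le_inf; last by move=> z; exact: lbS.
  by exists (Q6 n 0); apply: inS; rewrite /=; apply/andP; split; lra.
have hc6 : c6 n = - inf S by [].
set c := c6 n in hN hc6.
have hcf : c < K * P2.f m 1 by rewrite hc6; lra.
have hc15 : 15 * K < c.
  set s1 := 15 / (2 * (m + 8)).
  have s10 : 0 <= s1 by rewrite /s1 divr_ge0 //; lra.
  have s11 : s1 <= 1.
    rewrite /s1 ler_pdivrMr; lra.
  have hu : -1 <= Num.sqrt s1 <= 1.
    have := sqrtr_ge0 s1; have := sqr_sqrtr s10; move=> h1 h2.
    apply/andP; split; nra.
  have := infle _ hu; rewrite Q6E sqr_sqrtr //.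
  have := f_s1 _ hm3; rewrite -/s1 => hs1.
  nra.
apply: (@core R n Y K c hn uY) => //.
- by move=> e; apply: (@design_sum R n Y hD) => y yY; apply: sphere_dot; exact: hS.
- move=> u hu; rewrite -Q6E hc6 opprK; exact: infle.
- by rewrite hN /b6 Q6E expr1n.
Qed.
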